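(* Let $H\trianglelefteq G\le\mathrm{Aut}~T$ be closed fractal subgroups with $H\ne1$. If $H$ is branch, then $G_H$ is branch and $$|G_H:H|=|\pi_D(G_H):\pi_D(H)|<\infty,$$ where $D$ is the depth of $H$ as a group of finite type.
   Context: $T$ is the $d$-adic rooted tree; $\mathcal L_n$ its $n$th level; $T^n$ the subtree of vertices at depth $\le n$; $\pi_n:\mathrm{Aut}~T\to\mathrm{Aut}~T^n$ restriction; congruence topology on $\mathrm{Aut}~T$. For $g\in\mathrm{Aut}~T$, vertex $v$ and $1\le n\le\infty$, the section $g|_v^n\in\mathrm{Aut}~T^n$ is defined by $(vw)^g=v^gw^{g|_v^n}$ for $w\in T^n$; write $g|_v=g|_v^\infty$. Fractal: closed under sections, level-transitive, and $\{g|_v:g\in G,v^g=v\}=G$ for all $v$. $\mathrm{rist}_G(v)$: elements fixing all non-descendants of $v$; $\mathrm{Rist}_G(n)=\prod_{v\in\mathcal L_n}\mathrm{rist}_G(v)$; $G$ branch if level-transitive and $|G:\mathrm{Rist}_G(n)|<\infty$ for all $n$. For $D\ge1$ and $\mathcal P\le\mathrm{Aut}~T^D$, $G_{\mathcal P}:=\{g:g|_v^D\in\mathcal P\ \forall v\}$; a group is of finite type of depth $D$ if it equals some such $G_{\mathcal P}$ (a closed fractal group is branch iff it is of finite type). $G_H:=\{g\in G:(g|_v)(g|_w)^{-1}\in H\ \forall v,w\}$. *)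

(* Defs.v *)
From mathcomp Require Import all_boot fingroup perm.
Set Implicit Arguments. Unset Strict Implicit. Unset Printing Implicit Defensive.
Local Open Scope group_scope.

Definition vert (d : nat) := seq 'I_d.

(* An automorphism of T is given by its portrait: a permutation label at
   each vertex.  This is a bijection with Aut T.  Right actions throughout. *)
Definition aut (d : nat) := vert d -> {perm 'I_d}.

Section Tree.
Variable d : nat.
Implicit Types (g h : aut d) (v w : vert d).

Definition section g v : aut d := fun w => g (v ++ w).

Fixpoint act g v {struct v} : vert d :=
  match v with
  | [::] => [::]
  | x :: w => g [::] x :: act (section g [:: x]) w
  end.

Fixpoint act_inv g v {struct v} : vert d :=
  match v with
  | [::] => [::]
  | x :: w => let y := (g [::])^-1 x in y :: act_inv (section g [:: y]) w
  end.

Definition aut1 : aut d := fun _ => 1.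
(* product gh = "first g, then h" *)
Definition autM g h : aut d := fun v => g v * h (act g v).
Definition autV g : aut d := fun v => (g (act_inv g v))^-1.

Definition is_subgroup (G : aut d -> Prop) :=
  [/\ G aut1, (forall g h, G g -> G h -> G (autM g h)) & (forall g, G g -> G (autV g))].

Definition normal_in (H G : aut d -> Prop) :=
  (forall h, H h -> G h) /\ (forall g h, G g -> H h -> H (autM (autM (autV g) h) g)).

(* pi_n : Aut T -> Aut T^n, where Aut T^n is identified with portraits that
   are trivial at all vertices of depth >= n. trunc n is a homomorphism. *)
Definition trunc (n : nat) g : aut d := fun v => if size v < n then g v else 1.

Definition img_trunc (n : nat) (G : aut d -> Prop) : aut d -> Prop :=
  fun x => exists g, G g /\ x = trunc n g.

Definition cong_closed (G : aut d -> Prop) :=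
  forall g, (forall n, exists h, G h /\ trunc n h = trunc n g) -> G g.

Definition level_transitive (G : aut d -> Prop) :=
  forall v w, size v = size w -> exists g, G g /\ act g v = w.

Definition fractal (G : aut d -> Prop) :=
  [/\ (forall g v, G g -> G (section g v)),
      level_transitive G &
      (forall v h, G h -> exists g, [/\ G g, act g v = v & section g v = h])].

(* |G : H| = n  (H a subgroup of G): n right-coset representatives *)
Definition index_eq (G H : aut d -> Prop) (n : nat) :=
  exists s : seq (aut d),
    [/\ size s = n,
        (forall i, i < n -> G (nth aut1 s i)),
        (forall i j, i < n -> j < n -> H (autM (nth aut1 s i) (autV (nth aut1 s j))) -> i = j) &
        (forall g, G g -> exists i, i < n /\ H (autM g (autV (nth aut1 s i))))].

Definition finite_index (G H : aut d -> Prop) := exists n, index_eq G H n.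

Definition rist (G : aut d -> Prop) v : aut d -> Prop :=
  fun g => G g /\ (forall w, ~~ prefix v w -> act g w = w).

Definition level (n : nat) : seq (vert d) := [seq val t | t <- enum {: n.-tuple 'I_d}].

Definition Rist (G : aut d -> Prop) (n : nat) : aut d -> Prop :=
  fun g => exists f : vert d -> aut d,
    (forall v, size v = n -> rist G v (f v)) /\
    g = foldr autM aut1 [seq f v | v <- level n].

Definition branch (G : aut d -> Prop) :=
  level_transitive G /\ forall n, finite_index G (Rist G n).

Definition finite_type_group (D : nat) (P : aut d -> Prop) : aut d -> Prop :=
  fun g => forall v, P (trunc D (section g v)).

Definition is_subgroup_level (D : nat) (P : aut d -> Prop) :=
  is_subgroup P /\ (forall x, P x -> trunc D x = x).

Definition GH (G H : aut d -> Prop) : aut d -> Prop :=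
  fun g => G g /\ forall v w, H (autM (section g v) (autV (section g w))).

End Tree.

(* Main.v *)
Require Import Defs.
From mathcomp Require Import all_boot fingroup perm.
From Stdlib Require Import FunctionalExtensionality ClassicalEpsilon Classical.
Set Implicit Arguments. Unset Strict Implicit. Unset Printing Implicit Defensive.
Local Open Scope group_scope.


Section Basic.
Variable d : nat.
Implicit Types (g h k : aut d) (u v w : vert d).

Lemma size_act g v : size (act g v) = size v.
Proof. by elim: v g => //= x v IH g; rewrite IH. Qed.

Lemma size_act_inv g v : size (act_inv g v) = size v.
Proof. by elim: v g => //= x v IH g; rewrite IH. Qed.

Lemma section_cat g v w : section (section g v) w = section g (v ++ w).
Proof. by apply: functional_extensionality => u; rewrite /section catA. Qed.

Lemma section0 g : section g [::] = g.
Proof. by []. Qed.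

Lemma act_cat g v w : act g (v ++ w) = act g v ++ act (section g v) w.
Proof.
elim: v g => //= x v IH g; rewrite IH section_cat //.
Qed.

Lemma act1 v : act (@aut1 d) v = v.
Proof. by elim: v => //= x v IH; rewrite perm1 IH. Qed.

Lemma section_autM g h v :
  section (autM g h) v = autM (section g v) (section h (act g v)).
Proof.
apply: functional_extensionality => w; rewrite /section /autM act_cat //.
Qed.

Lemma act_autM g h v : act (autM g h) v = act h (act g v).
Proof.
elim: v g h => //= x v IH g h.
rewrite /autM /= permM section_autM IH //.
Qed.

Lemma act_invK g v : act_inv g (act g v) = v.
Proof.
elim: v g => //= x v IH g; rewrite permK IH //.
Qed.

Lemma act_invKV g v : act g (act_inv g v) = v.
Proof.
elim: v g => //= x v IH g; rewrite permKV IH //.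
Qed.

Lemma act_autV g v : act (autV g) v = act_inv g v.
Proof.
elim: v g => //= x v IH g.
have -> : section (autV g) [:: x] = autV (section g [:: (g [::])^-1 x]).
  by apply: functional_extensionality => w.
by rewrite IH.
Qed.

Lemma autMA g h k : autM (autM g h) k = autM g (autM h k).
Proof.
apply: functional_extensionality => v; rewrite /autM act_autM mulgA //.
Qed.

Lemma aut1M g : autM (@aut1 d) g = g.
Proof. apply: functional_extensionality => v; rewrite /autM act1 mul1g //. Qed.

Lemma autM1 g : autM g (@aut1 d) = g.
Proof. apply: functional_extensionality => v; rewrite /autM mulg1 //. Qed.

Lemma autMV g : autM g (autV g) = @aut1 d.
Proof. apply: functional_extensionality => v; rewrite /autM /autV act_invK mulgV //. Qed.

Lemma autVM g : autM (autV g) g = @aut1 d.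
Proof. apply: functional_extensionality => v; rewrite /autM /autV act_autV mulVg //. Qed.

Lemma autV_uniq g h : autM g h = @aut1 d -> h = autV g.
Proof.
move=> E; rewrite -[h]aut1M -(autVM g) autMA E autM1 //.
Qed.

Lemma autVK g : autV (autV g) = g.
Proof. by symmetry; apply: autV_uniq; rewrite autVM. Qed.

Lemma autV_M g h : autV (autM g h) = autM (autV h) (autV g).
Proof.
by symmetry; apply: autV_uniq; rewrite autMA -(autMA h) autMV aut1M autMV.
Qed.

Lemma autV1 : autV (@aut1 d) = @aut1 d.
Proof. by symmetry; apply: autV_uniq; rewrite aut1M. Qed.

Lemma section_autV g v :
  section (autV g) v = autV (section g (act_inv g v)).
Proof.
apply: autV_uniq.
have := f_equal (fun x => section x (act_inv g v)) (autMV g).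
rewrite section_autM act_invKV => ->; by [].
Qed.

End Basic.


Section Trunc.
Variable d : nat.
Implicit Types (g h : aut d) (u v w : vert d).

Lemma act_trunc n g v : size v <= n -> act (trunc n g) v = act g v.
Proof.
elim: v g n => //= x v IH g [|n] //= Hs.
have -> : section (trunc n.+1 g) [:: x] = trunc n (section g [:: x]).
  by apply: functional_extensionality => w.
by rewrite IH.
Qed.

Lemma trunc_autM n g h : trunc n (autM g h) = autM (trunc n g) (trunc n h).
Proof.
apply: functional_extensionality => v; rewrite /trunc /autM.
case: ifP => Hv.
  by rewrite act_trunc ?(ltnW Hv) // size_act Hv.
by rewrite size_act Hv mulg1.
Qed.

Lemma trunc1 n : trunc n (@aut1 d) = @aut1 d.
Proof. by apply: functional_extensionality => v; rewrite /trunc; case: ifP. Qed.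

Lemma trunc_autV n g : trunc n (autV g) = autV (trunc n g).
Proof. by apply: autV_uniq; rewrite -trunc_autM autMV trunc1. Qed.

Lemma trunc_eqP n g h : trunc n g = trunc n h <-> (forall v, size v < n -> g v = h v).
Proof.
split=> [E v Hv|E].
  by have := f_equal (fun f => f v) E; rewrite /trunc Hv.
by apply: functional_extensionality => v; rewrite /trunc; case: ifP => // /E ->.
Qed.

Lemma trunc_mono m n g h : m <= n -> trunc n g = trunc n h -> trunc m g = trunc m h.
Proof.
move=> Hmn /trunc_eqP E; apply/trunc_eqP => v Hv; apply: E; exact: leq_trans Hv Hmn.
Qed.

Lemma trunc_trunc n g : trunc n (trunc n g) = trunc n g.
Proof. by apply/trunc_eqP => v Hv; rewrite /trunc Hv. Qed.

Definition supp g v := forall u, ~~ prefix v u -> g u = 1.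

Lemma act_fix g u : (forall k, k < size u -> g (take k u) = 1) -> act g u = u.
Proof.
elim: u g => //= x u IH g H.
have H0 := H 0 (ltn0Sn _); rewrite /= in H0; rewrite H0 perm1 IH //.
by move=> k Hk; have := H k.+1 Hk.
Qed.

Lemma supp_act g v u : supp g v -> ~~ prefix v u -> act g u = u.
Proof.
move=> S Hu; apply: act_fix => k Hk; apply: S; apply: contra Hu => Hp.
exact: prefix_trans Hp (prefix_take _ _).
Qed.

Lemma supp_act_self g v : supp g v -> act g v = v.
Proof.
move=> S; apply: act_fix => k Hk; apply: S; apply/negP => /size_prefix.
by rewrite size_take Hk leqNgt Hk.
Qed.

Lemma prefix_act g v u : act g v = v -> prefix v u -> prefix v (act g u).
Proof.
by move=> E /prefixP [s ->]; rewrite act_cat E prefix_prefix.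
Qed.

Lemma prefix_same v w u : size v = size w -> prefix v u -> prefix w u -> v = w.
Proof.
by rewrite !prefixE => E /eqP <- /eqP <-; rewrite E.
Qed.

Lemma prefix_rconsP v u a : prefix v (rcons u a) -> ~~ prefix v u -> v = rcons u a.
Proof.
move=> /prefixP [s]; case/lastP: s => [|s y]; first by rewrite cats0.
rewrite -rcons_cat => /rcons_inj [-> _]; by rewrite prefix_prefix.
Qed.

Lemma rist_supp (K : aut d -> Prop) v g : rist K v g <-> K g /\ supp g v.
Proof.
split=> [[Kg F]|[Kg S]]; split => //; last by move=> w Hw; exact: supp_act S Hw.
move=> u Hu.
have Eu : act g u = u by apply: F.
have Fa : forall a, rcons u a != v -> g u a = a.
  move=> a Ha.
  have Hn : ~~ prefix v (rcons u a).
    by apply/negP => Hp; move/eqP: Ha; apply; symmetry; apply: prefix_rconsP.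
  have := F _ Hn; rewrite -cats1 act_cat Eu /= => /(f_equal (@last _ a)).
  rewrite !last_cat /= /section cats0 //.
apply/permP => a; rewrite perm1.
case: (eqVneq (rcons u a) v) => [Ea|]; last exact: Fa.
case: (eqVneq (g u a) a) => // Hc.
have Hc' : rcons u (g u a) != v.
  by rewrite -Ea; apply/negP => /eqP /rcons_inj [] E; rewrite E eqxx in Hc.
have := Fa _ Hc' => /perm_inj E; by rewrite E eqxx in Hc.
Qed.

End Trunc.


Section RistS.
Variable d : nat.
Implicit Types (g h : aut d) (u v w : vert d).

Lemma mem_level m v : (v \in level d m) = (size v == m).
Proof.
apply/idP/idP.
  by case/mapP => t _ ->; rewrite size_tuple.
move=> Hv; apply/mapP; exists (Tuple Hv) => //; exact: mem_enum.
Qed.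

Lemma uniq_level m : uniq (level d m).
Proof. rewrite map_inj_uniq ?enum_uniq //; exact: val_inj. Qed.

Definition prodf (L : seq (vert d)) (f : vert d -> aut d) :=
  foldr (@autM d) (@aut1 d) [seq f v | v <- L].

Lemma prod_out L f u : (forall v, v \in L -> supp (f v) v) ->
  (forall v, v \in L -> ~~ prefix v u) -> prodf L f u = 1.
Proof.
rewrite /prodf; elim: L => //= a L IH S N.
rewrite /autM (S a (mem_head _ _) u (N a (mem_head _ _))).
rewrite (supp_act (S a (mem_head _ _)) (N a (mem_head _ _))) mul1g IH //.
  by move=> v Hv; apply: S; rewrite inE Hv orbT.
by move=> v Hv; apply: N; rewrite inE Hv orbT.
Qed.

Lemma prod_in L f u v m : uniq L -> (forall w, w \in L -> size w = m) ->
  (forall w, w \in L -> supp (f w) w) -> v \in L -> prefix v u -> prodf L f u = f v u.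
Proof.
rewrite /prodf; elim: L => //= a L IH /andP [aL uL] Sz S vL Pu.
have Sa := S a (mem_head _ _).
rewrite /autM; case: (eqVneq v a) => [Eva|Nva].
  subst v; rewrite -/(prodf L f) prod_out ?mulg1 //.
    by move=> w Hw; apply: S; rewrite inE Hw orbT.
  move=> w Hw; apply/negP => Pw.
  have Pa := prefix_act (supp_act_self Sa) Pu.
  have Ew : w = a.
    apply: prefix_same Pw Pa.
    by rewrite (Sz w) ?inE ?Hw ?orbT // (Sz a) ?mem_head.
  by rewrite -Ew Hw in aL.
have vL' : v \in L by move: vL; rewrite inE (negbTE Nva).
have Na : ~~ prefix a u.
  apply/negP => Pa; move/eqP: Nva; apply; apply: prefix_same Pu Pa.
  by rewrite (Sz v) ?inE ?vL' ?orbT // (Sz a) ?mem_head.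
rewrite (Sa u Na) (supp_act Sa Na) mul1g IH //.
- by move=> w Hw; apply: Sz; rewrite inE Hw orbT.
- by move=> w Hw; apply: S; rewrite inE Hw orbT.
Qed.

Lemma prod_K (K : aut d -> Prop) L f : is_subgroup K ->
  (forall v, v \in L -> K (f v)) -> K (prodf L f).
Proof.
move=> [K1 KM KV]; rewrite /prodf; elim: L => //= a L IH H.
apply: KM; first by apply: H; rewrite mem_head.
by apply: IH => v Hv; apply: H; rewrite inE Hv orbT.
Qed.

Definition restrict v g : aut d := fun u => if prefix v u then g u else 1.

Lemma supp_restrict v g : supp (restrict v g) v.
Proof. by move=> u /negbTE Hu; rewrite /restrict Hu. Qed.

Definition RistP (K : aut d -> Prop) m g :=
  (forall u, size u < m -> g u = 1) /\ (forall v, size v = m -> K (restrict v g)).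

Lemma Rist_RistP K m g : Rist K m g <-> RistP K m g.
Proof.
have Sz : forall w, w \in level d m -> size w = m by move=> w; rewrite mem_level => /eqP.
split.
  move=> [f [Hf ->]].
  have Sf : forall w, w \in level d m -> supp (f w) w.
    by move=> w /Sz /Hf /rist_supp [].
  split.
    move=> u Hu; apply: prod_out => // v /Sz Hv; apply/negP => /size_prefix.
    by rewrite Hv leqNgt Hu.
  move=> v Hv.
  have -> : restrict v (prodf (level d m) f) = f v.
    apply: functional_extensionality => u; rewrite /restrict; case: ifP => Pu.
      by apply: (prod_in (m := m)) => //; [exact: uniq_level | rewrite mem_level Hv].
    by rewrite (Sf v) ?Pu // mem_level Hv.
  by case: (proj1 (rist_supp _ _ _) (Hf v Hv)).
move=> [H1 H2]; exists (fun v => restrict v g); split.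
  by move=> v Hv; apply/rist_supp; split; [exact: H2 | exact: supp_restrict].
rewrite -/(prodf (level d m) (fun v => restrict v g)).
apply: functional_extensionality => u.
have Sr : forall w, w \in level d m -> supp (restrict w g) w by move=> w _; exact: supp_restrict.
case: (ltnP (size u) m) => Hu.
  rewrite H1 // prod_out // => v /Sz Hv; apply/negP => /size_prefix.
  by rewrite Hv leqNgt Hu.
have Pv : prefix (take m u) u by exact: prefix_take.
rewrite (prod_in (m := m) (v := take m u)) //; last by rewrite mem_level size_take_min (minn_idPl Hu).
- by rewrite /restrict Pv.
- exact: uniq_level.
Qed.

Lemma act_restrict_self v g : act (restrict v g) v = v.
Proof. apply: (@supp_act_self d); exact: supp_restrict. Qed.

Lemma restrict_autM v g h : (forall u, size u < size v -> g u = 1) ->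
  restrict v (autM g h) = autM (restrict v g) (restrict v h).
Proof.
move=> Hg; apply: functional_extensionality => u; rewrite /autM /restrict.
case: ifP => Pu.
  have Egv : act g v = v.
    apply: act_fix => k Hk; apply: Hg; by rewrite size_take Hk.
  have Eact : act (restrict v g) u = act g u.
    case/prefixP: Pu => s ->; rewrite !act_cat act_restrict_self Egv.
    congr (_ ++ _); congr act; apply: functional_extensionality => w.
    by rewrite /section /restrict prefix_prefix.
  by rewrite Eact (prefix_act Egv Pu).
rewrite (supp_act (@supp_restrict v g) (negbT Pu)) Pu mulg1 //.
Qed.

Lemma RistP_M (K : aut d -> Prop) m g h : is_subgroup K ->
  RistP K m g -> RistP K m h -> RistP K m (autM g h).
Proof.
move=> [K1 KM KV] [G1 G2] [H1 H2]; split.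
  move=> u Hu; rewrite /autM G1 // H1 ?size_act // mul1g //.
move=> v Hv; rewrite restrict_autM; first by apply: KM; [exact: G2 | exact: H2].
by move=> u; rewrite Hv; exact: G1.
Qed.

Lemma RistP_V (K : aut d -> Prop) m g : is_subgroup K ->
  RistP K m g -> RistP K m (autV g).
Proof.
move=> [K1 KM KV] [G1 G2]; split.
  move=> u Hu; rewrite /autV G1 ?size_act_inv // invg1 //.
move=> v Hv.
have -> : restrict v (autV g) = autV (restrict v g).
  apply: autV_uniq; rewrite -restrict_autM; last by move=> u; rewrite Hv; exact: G1.
  rewrite autMV; apply: functional_extensionality => u; rewrite /restrict; by case: ifP.
by apply: KV; exact: G2.
Qed.

End RistS.


Section Cover.
Variable d : nat.
Implicit Types (g h x y : aut d) (u v w : vert d).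

Lemma autVMK a x : autM (autV a) (autM a x) = x.
Proof. by rewrite -autMA autVM aut1M. Qed.

Lemma autMVK a x : autM a (autM (autV a) x) = x.
Proof. by rewrite -autMA autMV aut1M. Qed.

Lemma rel_sym (E : aut d -> Prop) x y : (forall a, E a -> E (autV a)) ->
  E (autM x (autV y)) -> E (autM y (autV x)).
Proof. by move=> Ev /Ev; rewrite autV_M autVK. Qed.

Lemma rel_trans (E : aut d -> Prop) g x y : (forall a b, E a -> E b -> E (autM a b)) ->
  E (autM g (autV x)) -> E (autM x (autV y)) -> E (autM g (autV y)).
Proof. by move=> Em H1 H2; have := Em _ _ H1 H2; rewrite autMA autVMK. Qed.

Lemma cover_gen (K E : aut d -> Prop) (L s : seq (aut d)) :
  (forall a, E a -> E (autV a)) -> (forall a b, E a -> E b -> E (autM a b)) ->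
  (forall i, i < size s -> K (nth (@aut1 d) s i)) ->
  (forall i j, i < size s -> j < size s ->
     E (autM (nth (@aut1 d) s i) (autV (nth (@aut1 d) s j))) -> i = j) ->
  (forall g, K g -> (exists i, i < size s /\ E (autM g (autV (nth (@aut1 d) s i)))) \/
                    (exists x, List.In x L /\ K x /\ E (autM g (autV x)))) ->
  exists n, index_eq K E n.
Proof.
move=> Ev Em.
elim: L s => [|a L IH] s Ks Ds Cs.
  exists (size s); exists s; split=> // g /Cs [[i [Hi Ei]]|[x [[] _]]]; by exists i.
case: (classic (K a /\ forall i, i < size s -> ~ E (autM a (autV (nth (@aut1 d) s i))))).
  move=> [Ka Na]; apply: (IH (rcons s a)).
  - move=> i; rewrite size_rcons ltnS nth_rcons leq_eqVlt.
    case/orP => [/eqP ->|Hi]; first by rewrite ltnn eqxx.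
    by rewrite Hi; apply: Ks.
  - move=> i j; rewrite size_rcons !ltnS !nth_rcons.
    move=> Hi Hj.
    case: (ltnP i (size s)) => Hi'; case: (ltnP j (size s)) => Hj'.
    + exact: Ds.
    + have -> : j = size s by apply/eqP; rewrite eqn_leq Hj Hj'.
      rewrite eqxx => /(rel_sym Ev) HE; exfalso; exact: Na Hi' HE.
    + have -> : i = size s by apply/eqP; rewrite eqn_leq Hi Hi'.
      rewrite eqxx => HE; exfalso; exact: Na Hj' HE.
    + move=> _; apply/eqP; rewrite eqn_leq (leq_trans Hi Hj') (leq_trans Hj Hi') //.
  - move=> g /Cs [[i [Hi Ei]]|[x [Lx [Kx Ex]]]].
      by left; exists i; rewrite size_rcons nth_rcons ltnS ltnW ?Hi.
    case: Lx => [Exa|Lx].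
      left; exists (size s); rewrite size_rcons nth_rcons ltnn eqxx; split => //.
      by rewrite Exa.
    by right; exists x.
move=> Nc; apply: (IH s) => // g /Cs [[i Hi]|[x [Lx [Kx Ex]]]].
  by left; exists i.
case: Lx => [Exa|Lx]; last by right; exists x.
subst x.
have [i [Hi Ei]] : exists i, i < size s /\ E (autM a (autV (nth (@aut1 d) s i))).
  apply: NNPP => N; apply: Nc; split => // i Hi Ei; apply: N; by exists i.
by left; exists i; split => //; exact: rel_trans Ex Ei.
Qed.

Lemma index_from_cover (K E : aut d -> Prop) (L : seq (aut d)) :
  (forall a, E a -> E (autV a)) -> (forall a b, E a -> E b -> E (autM a b)) ->
  (forall g, K g -> exists x, List.In x L /\ K x /\ E (autM g (autV x))) ->
  exists n, index_eq K E n.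
Proof.
move=> Ev Em C; apply: (@cover_gen K E L [::]) => // g /C H; by right.
Qed.

End Cover.

Section GHS.
Variable d : nat.
Implicit Types (g h x y : aut d) (u v w : vert d).
Variables G H : aut d -> Prop.
Hypothesis sG : is_subgroup G.
Hypothesis sH : is_subgroup H.
Hypothesis nHG : normal_in H G.
Hypothesis secG : forall g v, G g -> G (section g v).
Hypothesis secH : forall g v, H g -> H (section g v).

Lemma conjH x h : G x -> H h -> H (autM (autM x h) (autV x)).
Proof.
move=> Gx Hh; case: sG => _ _ GV.
have := nHG.2 _ _ (GV _ Gx) Hh; by rewrite autVK.
Qed.

Lemma H_GH h : H h -> GH G H h.
Proof.
move=> Hh; split; first exact: nHG.1.
case: sH => _ HM HV; move=> v w; apply: HM; first exact: secH.
by apply: HV; exact: secH.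
Qed.

Lemma GH_1 : GH G H (@aut1 d).
Proof.
case: sG => G1 _ _; case: sH => H1 _ _; split => // v w.
rewrite /section /=; rewrite -/(@aut1 d) autMV //.
Qed.

Lemma GH_M g k : GH G H g -> GH G H k -> GH G H (autM g k).
Proof.
move=> [Gg Hg] [Gk Hk]; case: sG => _ GM _; case: sH => _ HM HV.
split; first exact: GM.
move=> v w; rewrite !section_autM.
set A := section g v; set B := section k (act g v).
set C := section g w; set D := section k (act g w).
have -> : autM (autM A B) (autV (autM C D)) =
   autM (autM (autM A (autM B (autV D))) (autV A)) (autM A (autV C)).
  by rewrite autV_M !autMA autVMK.
apply: HM; last exact: Hg.
apply: conjH; [exact: secG | exact: Hk].
Qed.

Lemma GH_V g : GH G H g -> GH G H (autV g).
Proof.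
move=> [Gg Hg]; case: sG => _ _ GV; case: sH => _ HM HV.
split; first exact: GV.
move=> v w; rewrite !section_autV.
set A := section g (act_inv g v); set C := section g (act_inv g w).
have -> : autM (autV A) (autV (autV C)) = autM (autM (autV A) (autM C (autV A))) A.
  by rewrite autVK !autMA autVM autM1.
have := nHG.2 A (autM C (autV A)); rewrite !autMA; apply; first exact: secG.
exact: Hg.
Qed.

Lemma GH_sub : is_subgroup (GH G H).
Proof. split; [exact: GH_1 | exact: GH_M | exact: GH_V]. Qed.

End GHS.


Lemma pigeon_bound n (R : nat -> nat -> Prop) :
  (forall i B B', B <= B' -> R i B -> R i B') ->
  (forall i, i < n -> exists B, R i B) -> exists B, forall i, i < n -> R i B.
Proof.
move=> Rm; elim: n => [|n IH] H; first by exists 0.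
have [B HB] : exists B, forall i, i < n -> R i B.
  by apply: IH => i Hi; apply: H; exact: ltnW.
have [B' HB'] := H n (ltnSn n).
exists (maxn B B') => i; rewrite ltnS leq_eqVlt; case/orP => [/eqP ->|Hi].
  by apply: Rm HB'; exact: leq_maxr.
by apply: Rm (HB i Hi); exact: leq_maxl.
Qed.

Lemma pigeon n (Q : nat -> nat -> Prop) :
  (forall M, exists i, i < n /\ Q M i) ->
  exists i, i < n /\ forall M, exists M', M <= M' /\ Q M' i.
Proof.
move=> HQ; apply: NNPP => N.
have [B HB] : exists B, forall i, i < n -> forall M', B <= M' -> ~ Q M' i.
  apply: pigeon_bound.
    by move=> i B B' le HB M' le'; apply: HB; exact: leq_trans le le'.
  move=> i Hi; apply: NNPP => N2; apply: N; exists i; split => // M.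
  apply: NNPP => N3; apply: N2; exists M => M' le QM; apply: N3; by exists M'.
have [i [Hi Qi]] := HQ B.
exact: HB i Hi B (leqnn B) Qi.
Qed.

Section FT.
Variable d : nat.
Implicit Types (g h k : aut d) (u v w : vert d).
Variable H : aut d -> Prop.
Hypothesis sH : is_subgroup H.
Hypothesis cH : cong_closed H.
Hypothesis fH : fractal H.
Hypothesis bH : branch H.

Lemma rist_M v g h : rist H v g -> rist H v h -> rist H v (autM g h).
Proof.
case: sH => _ HM _.
move=> /rist_supp [Hg Sg] /rist_supp [Hh Sh]; apply/rist_supp; split; first exact: HM.
move=> u Hu; rewrite /autM (Sg u Hu) (supp_act Sg Hu) (Sh u Hu) mulg1 //.
Qed.

Lemma rist_V v g : rist H v g -> rist H v (autV g).
Proof.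
case: sH => _ _ HV.
move=> /rist_supp [Hg Sg]; apply/rist_supp; split; first exact: HV.
move=> u Hu; rewrite /autV.
have -> : act_inv g u = u by rewrite -{1}(supp_act Sg Hu) act_invK.
by rewrite (Sg u Hu) invg1.
Qed.

Lemma rist_1 v : rist H v (@aut1 d).
Proof. case: sH => H1 _ _; apply/rist_supp; split => //. Qed.

Definition Lx (x : 'I_d) k := exists r, rist H [:: x] r /\ section r [:: x] = k.

Lemma Lx_1 x : Lx x (@aut1 d).
Proof. by exists (@aut1 d); split => //; exact: rist_1. Qed.

Lemma Lx_M x g h : Lx x g -> Lx x h -> Lx x (autM g h).
Proof.
move=> [r1 [R1 <-]] [r2 [R2 <-]]; exists (autM r1 r2); split; first exact: rist_M.
rewrite section_autM (supp_act_self (proj2 (proj1 (rist_supp _ _ _) R1))) //.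
Qed.

Lemma Lx_V x g : Lx x g -> Lx x (autV g).
Proof.
move=> [r [R <-]]; exists (autV r); split; first exact: rist_V.
rewrite section_autV.
have -> : act_inv r [:: x] = [:: x].
  by rewrite -{1}(supp_act_self (proj2 (proj1 (rist_supp _ _ _) R))) act_invK.
by [].
Qed.

Definition ext (x : 'I_d) k : aut d :=
  fun u => if u is y :: w then (if y == x then k w else 1) else 1.

Lemma Lx_closed x k : (forall n, exists l, Lx x l /\ trunc n l = trunc n k) -> Lx x k.
Proof.
move=> C; exists (ext x k).
have Sx : supp (ext x k) [:: x].
  by move=> [|y w] //=; rewrite prefix0s andbT eq_sym /ext => /negbTE ->.
split; last by apply: functional_extensionality => w; rewrite /section /ext /= eqxx.
apply/rist_supp; split => //.
apply: cH => n; have [l [[r [R El]] Tl]] := C n.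
exists r; split; first by case/rist_supp: R.
have Sr := proj2 (proj1 (rist_supp _ _ _) R).
apply/trunc_eqP => [[|y w]] Hu; first by rewrite (Sr [::]) //.
rewrite /ext; case: (eqVneq y x) => [->|Nyx].
  have := proj1 (trunc_eqP n l k) Tl w (ltn_trans (ltnSn _) Hu).
  by rewrite -El.
by rewrite Sr //= prefix0s andbT eq_sym.
Qed.

Lemma Lx_cover x : exists c : seq (aut d), (forall i, i < size c -> H (nth (@aut1 d) c i)) /\
  forall h, H h -> exists i, i < size c /\ Lx x (autM h (autV (nth (@aut1 d) c i))).
Proof.
case: bH => _ /(_ 1%N) [n [s [Sz Hs _ Cs]]].
case: fH => secH _ frH.
exists [seq section c [:: x] | c <- s]; split.
  by move=> i; rewrite size_map => Hi; rewrite (nth_map (@aut1 d)) //; apply: secH; apply: Hs; rewrite -Sz.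
move=> h Hh.
have [f [Hf Ef Sf]] := frH [:: x] h Hh.
have [i [Hi Ri]] := Cs f Hf.
exists i; rewrite size_map Sz; split => //.
rewrite (nth_map (@aut1 d)) ?Sz //.
set c := nth (@aut1 d) s i in Ri *.
set rho := autM f (autV c) in Ri.
have [R1 R2] := proj1 (Rist_RistP _ _ _) Ri.
have Ef' : f = autM rho c by rewrite /rho autMA autVM autM1.
have Arho : act rho [:: x] = [:: x] by apply: act_fix => k; rewrite ltnS leqn0 => /eqP ->; exact: R1.
rewrite -Sf Ef' section_autM Arho autMA autMV autM1.
exists (restrict [:: x] rho); split.
  by apply/rist_supp; split; [exact: R2 | exact: supp_restrict].
by apply: functional_extensionality => w; rewrite /section /restrict /= eqxx prefix0s.
Qed.

Lemma Lx_open x : exists M, forall k, H k -> trunc M k = @aut1 d -> Lx x k.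
Proof.
case: sH => H1 HM HV.
have [c [Hc Cc]] := Lx_cover x.
apply: NNPP => N.
have Q : forall M, exists i, i < size c /\
    exists k, [/\ H k, trunc M k = @aut1 d, ~ Lx x k & Lx x (autM k (autV (nth (@aut1 d) c i)))].
  move=> M; have [k [Hk [Tk Nk]]] : exists k, H k /\ trunc M k = @aut1 d /\ ~ Lx x k.
    apply: NNPP => N2; apply: N; exists M => k Hk Tk; apply: NNPP => N3; apply: N2.
    by exists k.
  have [i [Hi Li]] := Cc k Hk; exists i; split => //; by exists k.
have [i [Hi Fi]] := pigeon Q.
set ci := nth (@aut1 d) c i in Fi.
have Lci : Lx x ci.
  rewrite -[ci]autVK; apply: Lx_V; apply: Lx_closed => M.
  have [M' [le [k [Hk Tk _ Lk]]]] := Fi M.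
  exists (autM k (autV ci)); split => //.
  rewrite !trunc_autM.
  have -> : trunc M k = @aut1 d by rewrite (trunc_mono le (etrans Tk (esym (@trunc1 d M')))) trunc1.
  by rewrite aut1M trunc_autV.
have [M' [_ [k [Hk Tk Nk Lk]]]] := Fi 0.
apply: Nk; have := Lx_M Lk Lci; by rewrite autMA autVM autM1.
Qed.

Lemma bound_fin (P : 'I_d -> nat -> Prop) :
  (forall x M M', M <= M' -> P x M -> P x M') -> (forall x, exists M, P x M) ->
  exists M, forall x, P x M.
Proof.
move=> Pm HP.
have [M HM] : exists M, forall x, x \in enum 'I_d -> P x M.
  elim: (enum 'I_d) => [|a s [M HM]]; first by exists 0.
  have [Ma Ha] := HP a; exists (maxn M Ma) => x; rewrite inE; case/orP => [/eqP ->|Hx].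
    by apply: Pm Ha; exact: leq_maxr.
  by apply: Pm (HM x Hx); exact: leq_maxl.
by exists M => x; apply: HM; rewrite mem_enum.
Qed.

Lemma all_open : exists M, forall x k, H k -> trunc M k = @aut1 d -> Lx x k.
Proof.
apply: bound_fin; last exact: Lx_open.
move=> x M M' le HM k Hk Tk; apply: HM => //.
by rewrite (trunc_mono le (etrans Tk (esym (@trunc1 d M')))) trunc1.
Qed.

End FT.


Section FT2.
Variable d : nat.
Implicit Types (g h k : aut d) (u v w : vert d).
Variable H : aut d -> Prop.
Hypothesis sH : is_subgroup H.
Hypothesis cH : cong_closed H.
Hypothesis fH : fractal H.
Hypothesis bH : branch H.

Lemma Rist_sub K m g : is_subgroup K -> Rist K m g -> K g.
Proof.
move=> sK [f [Hf ->]]; apply: (@prod_K d K (level d m) f sK) => v.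
by rewrite mem_level => /eqP /Hf [].
Qed.

Lemma FT_core : exists D, 0 < D /\
  forall g, (forall v, img_trunc D H (trunc D (section g v))) -> H g.
Proof.
have [M HM] := all_open sH cH fH bH.
case: (sH) => H1 HMul HV.
case: (fH) => secH _ _.
exists M.+1; split => //.
set D := M.+1.
have Claim : forall n g, (forall v, img_trunc D H (trunc D (section g v))) ->
    exists h, H h /\ trunc n h = trunc n g.
  elim=> [|n IH] g Hg.
    by exists (@aut1 d); split => //; apply/trunc_eqP.
  have [h0 [H0 E0]] := Hg [::].
  rewrite section0 in E0.
  case: (leqP n.+1 D) => Hn.
    by exists h0; split => //; apply: trunc_mono Hn _; rewrite E0.
  set g' := autM (autV h0) g.
  have Hg' : forall v, img_trunc D H (trunc D (section g' v)).
    move=> v; rewrite /g' section_autM trunc_autM.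
    have [h2 [H2 E2]] := Hg (act (autV h0) v).
    exists (autM (section (autV h0) v) h2); split.
      by apply: HMul => //; apply: secH; exact: HV.
    by rewrite trunc_autM E2.
  have Tg' : forall u, size u < D -> g' u = 1.
    have T : trunc D g' = @aut1 d by rewrite /g' trunc_autM E0 trunc_autV autVM.
    move=> u Hu; rewrite -(@trunc1 d D) in T; exact (proj1 (trunc_eqP D g' (@aut1 d)) T u Hu).
  have Ex : forall x : 'I_d, exists r, rist H [:: x] r /\
      trunc n (section r [:: x]) = trunc n (section g' [:: x]).
    move=> x.
    have [hx [Hx Ehx]] : exists h, H h /\ trunc n h = trunc n (section g' [:: x]).
      by apply: IH => v; rewrite section_cat; exact: Hg'.
    have : Lx H x hx.
      apply: HM => //; rewrite -(@trunc1 d M); apply/trunc_eqP => w Hw.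
      have := proj1 (trunc_eqP _ _ _) (trunc_mono (m := M) (ltnW Hn) Ehx) w Hw.
      move=> ->; rewrite /section /=; apply: Tg'; by [].
    by case=> r [R Er]; exists r; rewrite Er.
  pose rr x := epsilon (inhabits (@aut1 d)) (fun r => rist H [:: x] r /\
      trunc n (section r [:: x]) = trunc n (section g' [:: x])).
  have Rr : forall x, rist H [:: x] (rr x) /\
      trunc n (section (rr x) [:: x]) = trunc n (section g' [:: x]).
    move=> x; exact: (epsilon_spec (inhabits (@aut1 d)) _ (Ex x)).
  pose k : aut d := fun u => if u is x :: w then rr x u else 1.
  have Rk : RistP H 1 k.
    split; first by move=> [|y w].
    move=> [|y [|z w]] // _.
    have Sy := proj2 (proj1 (rist_supp _ _ _) (Rr y).1).
    have -> : restrict [:: y] k = rr y.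
      apply: functional_extensionality => [[|z w]]; rewrite /restrict /=.
        by rewrite Sy.
      rewrite prefix0s andbT; case: (eqVneq y z) => [->|Nyz] //.
      by rewrite Sy //= prefix0s andbT Nyz.
    by case: (proj1 (rist_supp _ _ _) (Rr y).1).
  have Hk : H k by apply: (Rist_sub (m := 1)) => //; apply/Rist_RistP.
  exists (autM h0 k); split; first exact: HMul.
  rewrite trunc_autM.
  have -> : trunc n.+1 k = trunc n.+1 g'.
    apply/trunc_eqP => [[|x w]] Hu; first by rewrite Tg'.
    have := proj1 (trunc_eqP _ _ _) (Rr x).2 w Hu.
    by rewrite /section /=.
  by rewrite -trunc_autM /g' autMVK.
move=> g Hg; apply: cH => n; exact: Claim.
Qed.

Lemma FT_full : exists D (P : aut d -> Prop), 1 <= D /\ is_subgroup_level D P /\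
  forall g, H g <-> finite_type_group D P g.
Proof.
have [D [HD HF]] := FT_core.
case: (sH) => H1 HMul HV.
case: (fH) => secH _ _.
exists D, (img_trunc D H); split => //; split.
  split; first split.
  - by exists (@aut1 d); rewrite trunc1.
  - by move=> _ _ [a [Ha ->]] [b [Hb ->]]; exists (autM a b); rewrite trunc_autM; split => //; exact: HMul.
  - by move=> _ [a [Ha ->]]; exists (autV a); rewrite trunc_autV; split => //; exact: HV.
  by move=> _ [a [Ha ->]]; rewrite trunc_trunc.
move=> g; split; last exact: HF.
by move=> Hg v; exists (section g v); split => //; exact: secH.
Qed.

End FT2.


Lemma In_mem (T : eqType) (x : T) s : x \in s -> List.In x s.
Proof. elim: s => //= a s IH; rewrite inE => /orP [/eqP ->|/IH]; by [left|right]. Qed.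

Lemma In_map (T1 T2 : Type) (f : T1 -> T2) x s : List.In x s -> List.In (f x) (map f s).
Proof. elim: s => //= a s IH [->|/IH]; by [left|right]. Qed.

Lemma In_nth (T : Type) (x0 : T) s i : i < size s -> List.In (nth x0 s i) s.
Proof. elim: s i => //= a s IH [|i] Hi; by [left | right; apply: IH]. Qed.

Section Main.
Variable d : nat.
Implicit Types (g h k : aut d) (u v w : vert d).
Variables G H : aut d -> Prop.
Hypothesis sG : is_subgroup G.
Hypothesis sH : is_subgroup H.
Hypothesis nHG : normal_in H G.
Hypothesis secG : forall g v, G g -> G (section g v).
Hypothesis secH : forall g v, H g -> H (section g v).

Variable D : nat.
Variable P : aut d -> Prop.
Hypothesis SP : is_subgroup_level D P.
Hypothesis HP : forall g, H g <-> finite_type_group D P g.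

Lemma L1 x : GH G H x -> P (trunc D x) -> H x.
Proof.
move=> [Gx Hx] Px; apply/HP => v.
have Hv : H (autM (section x v) (autV x)) := Hx v [::].
have -> : section x v = autM (autM (section x v) (autV x)) x by rewrite autMA autVM autM1.
rewrite trunc_autM; case: SP => [[_ PM _] _]; apply: PM => //.
by have := proj1 (HP _) Hv [::].
Qed.

Definition VD := flatten [seq level d i | i <- iota 0 D].

Lemma mem_VD v : size v < D -> v \in VD.
Proof.
move=> Hv; apply/flattenP; exists (level d (size v)); last by rewrite mem_level.
by apply: map_f; rewrite mem_iota.
Qed.

Definition key g : {ffun 'I_(size VD) -> {perm 'I_d}} := [ffun i : 'I_(size VD) => g (nth [::] VD i)].

Lemma key_trunc g k : key g = key k -> trunc D g = trunc D k.
Proof.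
move=> E; apply/trunc_eqP => v Hv.
have Hi : index v VD < size VD by rewrite index_mem; exact: mem_VD.
have := congr1 (fun f : {ffun 'I_(size VD) -> {perm 'I_d}} => f (Ordinal Hi)) E; rewrite !ffunE /= nth_index //; exact: mem_VD.
Qed.

Lemma main_index : exists n, index_eq (GH G H) H n /\
   index_eq (img_trunc D (GH G H)) (img_trunc D H) n.
Proof.
have sGH := GH_sub sG sH nHG secG.
case: (sGH) => GH1 GHM GHV.
case: (sH) => H1 HM HV.
case: SP => [[P1 PM PV] _].
pose wit t := epsilon (inhabits (@aut1 d)) (fun k => GH G H k /\ key k = t).
have [n [s [Sz Ks Ds Cs]]] : exists n, index_eq (GH G H) H n.
  apply: (@index_from_cover d _ _ (map wit (enum {: {ffun 'I_(size VD) -> {perm 'I_d}}}))) => //.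
  move=> g Gg; exists (wit (key g)).
  have [Gw Kw] : GH G H (wit (key g)) /\ key (wit (key g)) = key g.
    by apply: (epsilon_spec (inhabits (@aut1 d)) (fun k => GH G H k /\ key k = key g)); exists g.
  split; first by apply: In_map; apply: In_mem; rewrite mem_enum.
  split => //; apply: L1; first by apply: GHM => //; exact: GHV.
  by rewrite trunc_autM trunc_autV (key_trunc Kw) autMV.
exists n; split; first by exists s.
exists (map (trunc D) s); split.
- by rewrite size_map.
- by move=> i Hi; rewrite (nth_map (@aut1 d)) ?Sz //; exists (nth (@aut1 d) s i); split => //; exact: Ks.
- move=> i j Hi Hj; rewrite !(nth_map (@aut1 d)) ?Sz // => [[h [Hh E]]].
  apply: Ds => //; apply: L1.
    by apply: GHM; [exact: Ks | apply: GHV; exact: Ks].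
  by rewrite trunc_autM trunc_autV E; have := proj1 (HP _) Hh [::].
- move=> _ [g [Gg ->]]; have [i [Hi Ei]] := Cs g Gg; exists i; split => //.
  exists (autM g (autV (nth (@aut1 d) s i))); split => //.
  by rewrite (nth_map (@aut1 d)) ?Sz // trunc_autM trunc_autV.
Qed.

End Main.


Lemma Rist_mono d (H K : aut d -> Prop) m x : (forall g, H g -> K g) -> Rist H m x -> Rist K m x.
Proof.
move=> HK [f [Hf ->]]; exists f; split => // v /Hf [Hv Fv]; split => //; exact: HK.
Qed.

Theorem proposition2p10 (d : nat) (G H : aut d -> Prop) :
  is_subgroup G -> is_subgroup H -> normal_in H G ->
  cong_closed G -> cong_closed H -> fractal G -> fractal H ->
  (exists h, H h /\ h <> @aut1 d) ->
  branch H ->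
  branch (GH G H) /\
  (forall (D : nat) (P : aut d -> Prop),
     1 <= D -> is_subgroup_level D P ->
     (forall g, H g <-> finite_type_group D P g) ->
     exists n : nat,
       index_eq (GH G H) H n /\
       index_eq (img_trunc D (GH G H)) (img_trunc D H) n).
Proof.
move=> sG sH nHG cG cH fG fH _ bH.
have secG : forall g v, G g -> G (section g v) by case: fG.
have secH : forall g v, H g -> H (section g v) by case: fH.
have sGH := GH_sub sG sH nHG secG.
split; last first.
  move=> D P _ SP HP; exact: (main_index sG sH nHG secG SP HP).
split.
  case: fH => _ ltH _ v w E; have [g [Hg Eg]] := ltH v w E.
  by exists g; split => //; exact: H_GH.
move=> m.
have [D [P [_ [SP HP]]]] := FT_full sH cH fH bH.
have [n0 [[r [Szr Gr Dr Cr]] _]] := main_index sG sH nHG secG SP HP.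
have [n1 [s [Szs Hs Ds Cs]]] := bH.2 m.
apply: (@index_from_cover d _ _ (List.flat_map (fun a => List.map (fun b => autM a b) r) s)).
- by move=> a /Rist_RistP Ra; apply/Rist_RistP; exact: RistP_V.
- by move=> a b /Rist_RistP Ra /Rist_RistP Rb; apply/Rist_RistP; exact: RistP_M.
move=> g Gg.
have [j [Hj Ej]] := Cr g Gg.
have [i [Hi Ei]] := Cs _ Ej.
exists (autM (nth (@aut1 d) s i) (nth (@aut1 d) r j)); split.
  apply/List.in_flat_map; exists (nth (@aut1 d) s i); split.
    by apply: In_nth; rewrite Szs.
  by apply: List.in_map; apply: In_nth; rewrite Szr.
split.
  case: sGH => _ GM _; apply: GM; last exact: Gr.
  by apply: (H_GH sH nHG secH); exact: Hs.
rewrite autV_M -autMA.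
apply: (Rist_mono (H := H)) => // h; exact: (H_GH sH nHG secH).
Qed.
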